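(* Let $\mathbf{p}_1,\mathbf{p}_2,\mathbf{p}_3\in\mathbb{R}^n$, and set $a=\|\mathbf{p}_1-\mathbf{p}_2\|$, $b=\|\mathbf{p}_2-\mathbf{p}_3\|$, $c=\|\mathbf{p}_1-\mathbf{p}_3\|$. Then the degree of monotonicity of the sequence $\mathbf{p}_1,\mathbf{p}_2,\mathbf{p}_3$ equals \[ R=\begin{cases}\tfrac12 c & \text{if } a^2+b^2>c^2,\\ R^{\mathrm{outcircle}} & \text{otherwise,}\end{cases} \] where $R^{\mathrm{outcircle}}$ is the radius of the circle passing through $\mathbf{p}_1,\mathbf{p}_2,\mathbf{p}_3$.
   Context: A closed ball in $\mathbb{R}^n$ is a set $\{x:\|x-q\|\le\rho\}$ with radius $\rho$. The degree of monotonicity of a finite sequence (vector-valued signal) $\mathbf{p}_1,\mathbf{p}_2,\mathbf{p}_3$ is the largest value $R$ such that, for every closed ball $B$ of radius at most $R$, the set of indices $\{i\in\{1,2,3\}:\mathbf{p}_i\in B\}$ is a set of consecutive integers. The circumradius $R^{\mathrm{outcircle}}$ of the three points is given (whenever $a,b,c>0$) by Heron's formula $R^{\mathrm{outcircle}}=\frac{abc}{4\sqrt{\sigma(\sigma-a)(\sigma-b)(\sigma-c)}}$ with $\sigma=(a+b+c)/2$. *)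

(* Defs.v *)
From HB Require Import structures.
From mathcomp Require Import all_boot all_order all_algebra.
From mathcomp Require Import all_classical all_reals all_analysis.
Set Implicit Arguments. Unset Strict Implicit. Unset Printing Implicit Defensive.
Import Order.TTheory GRing.Theory Num.Theory.
Local Open Scope classical_set_scope.
Local Open Scope ring_scope.

Definition enorm (R : realType) (n : nat) (x : 'rV[R]_n) : R :=
  Num.sqrt (\sum_(i < n) (x ord0 i) ^+ 2).

Definition cball (R : realType) (n : nat) (q : 'rV[R]_n) (rho : R) : set 'rV[R]_n :=
  [set x | enorm (x - q) <= rho].

Definition consecutive_in (R : realType) (n : nat) (s : seq 'rV[R]_n)
    (B : set 'rV[R]_n) : Prop :=
  forall i j k : nat, (i <= j)%N -> (j <= k)%N -> (k < size s)%N ->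
    B (nth 0 s i) -> B (nth 0 s k) -> B (nth 0 s j).

Definition mono_ok (R : realType) (n : nat) (s : seq 'rV[R]_n) (r : R) : Prop :=
  forall (q : 'rV[R]_n) (rho : R), rho <= r -> consecutive_in s (cball q rho).

Definition degree_monotonicity (R : realType) (n : nat) (s : seq 'rV[R]_n) : \bar R :=
  ereal_sup [set (r%:E)%E | r in [set r | mono_ok s r]].

(* Circumradius by Heron's formula; +oo when the triangle is degenerate
   (Heron radicand = 0: collinear or coincident points). *)
Definition outradius (R : realType) (a b c : R) : \bar R :=
  let sg := (a + b + c) / 2 in
  let D := sg * (sg - a) * (sg - b) * (sg - c) in
  if 0 < D then ((a * b * c / (4 * Num.sqrt D))%:E)%E else (+oo)%E.

(* Main.v *)
Require Import Defs.
From HB Require Import structures.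
From mathcomp Require Import all_boot all_order all_algebra.
From mathcomp Require Import all_classical all_reals all_analysis.
From mathcomp Require Import ring lra.
Import Order.TTheory GRing.Theory Num.Theory.
Local Open Scope ring_scope.
Set Implicit Arguments. Unset Strict Implicit.

Section Dot.
Variables (R : realType) (n : nat).
Implicit Types (x y z : 'rV[R]_n).

Definition dot x y : R := \sum_(i < n) x ord0 i * y ord0 i.

Lemma dotC x y : dot x y = dot y x.
Proof. by apply: eq_bigr => i _; rewrite mulrC. Qed.

Lemma dotDl x y z : dot (x + y) z = dot x z + dot y z.
Proof. by rewrite /dot -big_split; apply: eq_bigr => i _; rewrite !mxE mulrDl. Qed.

Lemma dotZl (k : R) x y : dot (k *: x) y = k * dot x y.
Proof. by rewrite /dot mulr_sumr; apply: eq_bigr => i _; rewrite !mxE mulrA. Qed.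

Lemma dotNl x y : dot (- x) y = - dot x y.
Proof. by rewrite -scaleN1r dotZl mulN1r. Qed.

Lemma dotBl x y z : dot (x - y) z = dot x z - dot y z.
Proof. by rewrite dotDl dotNl. Qed.

Lemma dotDr x y z : dot z (x + y) = dot z x + dot z y.
Proof. by rewrite dotC dotDl !(dotC z). Qed.

Lemma dotZr (k : R) x y : dot y (k *: x) = k * dot y x.
Proof. by rewrite dotC dotZl dotC. Qed.

Lemma dotBr x y z : dot z (x - y) = dot z x - dot z y.
Proof. by rewrite dotC dotBl !(dotC z). Qed.

Lemma dotNr x y : dot y (- x) = - dot y x.
Proof. by rewrite dotC dotNl dotC. Qed.

Lemma dot_ge0 x : 0 <= dot x x.
Proof. by apply: sumr_ge0 => i _; rewrite -expr2 sqr_ge0. Qed.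

Lemma enorm_sq x : enorm x ^+ 2 = dot x x.
Proof. by rewrite /enorm sqr_sqrtr // -/(dot x x) dot_ge0. Qed.

Lemma enorm_ge0 x : 0 <= enorm x.
Proof. exact: sqrtr_ge0. Qed.

Lemma dot_eq0 x y : dot x x = 0 -> dot x y = 0.
Proof.
move=> /eqP; rewrite /dot psumr_eq0; last by move=> i _; rewrite -expr2 sqr_ge0.
move=> /allP H; apply: big1 => i _.
have : x ord0 i * x ord0 i == 0 by apply: H; rewrite mem_index_enum.
by rewrite mulf_eq0 orbb => /eqP ->; rewrite mul0r.
Qed.

Lemma dotBB x y : dot (x - y) (x - y) = dot x x - 2 * dot x y + dot y y.
Proof. rewrite !dotBl !dotBr (dotC y x); ring. Qed.

Lemma dot_lin3 (k1 k2 k3 : R) x y z :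
  dot (k1 *: x + k2 *: y + k3 *: z) (k1 *: x + k2 *: y + k3 *: z) =
  k1^+2 * dot x x + k2^+2 * dot y y + k3^+2 * dot z z
  + 2 * k1 * k2 * dot x y + 2 * k1 * k3 * dot x z + 2 * k2 * k3 * dot y z.
Proof.
rewrite !dotDl !dotDr !dotZl !dotZr (dotC y x) (dotC z x) (dotC z y); ring.
Qed.

Lemma le_enorm x rho : 0 <= rho -> dot x x <= rho ^+ 2 -> enorm x <= rho.
Proof. move=> h0; rewrite -enorm_sq => h; have := enorm_ge0 x; nra. Qed.

Lemma lt_enorm x rho : 0 <= rho -> rho ^+ 2 < dot x x -> rho < enorm x.
Proof. move=> h0; rewrite -enorm_sq => h; have := enorm_ge0 x; nra. Qed.

Lemma enorm_le x rho : enorm x <= rho -> 0 <= rho /\ dot x x <= rho ^+ 2.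
Proof. rewrite -enorm_sq => h; have := enorm_ge0 x; split; nra. Qed.

Lemma enorm_gt x rho : 0 <= rho -> rho < enorm x -> rho ^+ 2 < dot x x.
Proof. rewrite -enorm_sq => h0 h; have := enorm_ge0 x; nra. Qed.

End Dot.
Lemma consec3 (R : realType) (n : nat) (p1 p2 p3 : 'rV[R]_n) (B : set 'rV[R]_n) :
  consecutive_in [:: p1; p2; p3] B <-> (B p1 -> B p3 -> B p2).
Proof.
split; first by move=> H; exact: (H 0 1 2)%N.
by move=> H [|[|[|i]]] [|[|[|j]]] [|[|[|k]]] //= _ _ _; auto.
Qed.
Lemma L3alg (R : realFieldType) (A B K W al be rho2 : R) :
  0 <= A -> 0 <= B -> K <= 0 -> 0 < A * B - K ^+ 2 ->
  A - 2 * al + W <= rho2 -> B - 2 * be + W <= rho2 -> rho2 < W ->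
  B * al ^+ 2 - 2 * K * al * be + A * be ^+ 2 <= (A * B - K ^+ 2) * W ->
  A * B * (A + B - 2 * K) / 4 <= (A * B - K ^+ 2) * rho2.
Proof.
move=> hA hB hK hG h1 h2 h3 hQ.
set h := (W - rho2) / 2.
have hh : 0 < h by rewrite /h; lra.
have ha : A / 2 + h <= al by rewrite /h; lra.
have hb : B / 2 + h <= be by rewrite /h; lra.
have x0 : 0 <= A / 2 + h by lra.
have y0 : 0 <= B / 2 + h by lra.
have e1 : (A / 2 + h) ^+ 2 <= al ^+ 2 by nra.
have e2 : (B / 2 + h) ^+ 2 <= be ^+ 2 by nra.
have e3 : (A / 2 + h) * (B / 2 + h) <= al * be by nra.
have mono : B * (A / 2 + h) ^+ 2 - 2 * K * (A / 2 + h) * (B / 2 + h) + A * (B / 2 + h) ^+ 2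
   <= B * al ^+ 2 - 2 * K * al * be + A * be ^+ 2 by nra.
have idQ : B * (A / 2 + h) ^+ 2 - 2 * K * (A / 2 + h) * (B / 2 + h) + A * (B / 2 + h) ^+ 2
   = A * B * (A + B - 2 * K) / 4 + h * (2 * A * B - K * (A + B)) + h ^+ 2 * (A + B - 2 * K).
  by field.
have ex : 0 <= - K * ((A + B) / 2 - K) by nra.
have hC : 0 <= h ^+ 2 * (A + B - 2 * K) by nra.
have -> : rho2 = W - 2 * h by rewrite /h; field.
nra.
Qed.

Lemma gram_id (R : realFieldType) (A B K al be : R) :
  let G := A * B - K ^+ 2 in
  let P1 := B * al - K * be in let P2 := A * be - K * al in
  P1 ^+ 2 * A + P2 ^+ 2 * B + 2 * P1 * P2 * K = G * (B * al ^+ 2 - 2 * K * al * be + A * be ^+ 2)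
  /\ P1 * al + P2 * be = B * al ^+ 2 - 2 * K * al * be + A * be ^+ 2.
Proof. move=> G P1 P2; rewrite /G /P1 /P2; split; ring. Qed.
Lemma sup_eq (R : realType) (S : set R) (t : \bar R) :
  (forall r : R, (r%:E < t)%E -> S r) -> (forall r, S r -> (r%:E <= t)%E) ->
  ereal_sup [set (r%:E)%E | r in S] = t.
Proof.
move=> H1 H2; apply/eqP; rewrite eq_le; apply/andP; split.
  by apply/ereal_supP => _ [r Sr <-]; exact: H2.
rewrite leNgt; apply/negP => hlt.
have ub : forall r, S r -> (r%:E <= ereal_sup [set (r%:E)%E | r in S])%E.
  by move=> r Sr; apply: ereal_sup_ubound; exists r.
move: hlt; case E : (ereal_sup _) => [s| |] //.
- case: t H1 H2 => [r| |] H1 H2 //.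
  + rewrite lte_fin => sr.
    have h : (((s + r) / 2)%:E < r%:E)%E by rewrite lte_fin; lra.
    have := ub ((s + r) / 2) (H1 _ h); rewrite E lee_fin; lra.
  + move=> _; have := ub (s + 1) (H1 _ (ltry _)); rewrite E lee_fin; lra.
- by case: t {H1 H2}.
- case: t H1 H2 => [r| |] H1 H2 // _.
  + have h : ((r - 1)%:E < r%:E)%E by rewrite lte_fin; lra.
    by have := ub (r - 1) (H1 _ h); rewrite E.
  + by have := ub 0 (H1 _ (ltry _)); rewrite E.
Qed.

Ltac dsimp := rewrite ?(dotBl, dotBr, dotDl, dotDr, dotZl, dotZr, dotNl, dotNr).

Lemma enormN (R : realType) (n : nat) (x : 'rV[R]_n) : enorm (- x) = enorm x.
Proof. by rewrite /enorm; congr Num.sqrt; apply: eq_bigr => i _; rewrite mxE sqrrN. Qed.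

Unset Implicit Arguments.
Set Strict Implicit.

Theorem theorem1 (R : realType) (n : nat) (p1 p2 p3 : 'rV[R]_n) :
  let a := enorm (p1 - p2) in
  let b := enorm (p2 - p3) in
  let c := enorm (p1 - p3) in
  degree_monotonicity [:: p1; p2; p3] =
    (if c ^+ 2 < a ^+ 2 + b ^+ 2 then ((c / 2)%:E)%E else outradius a b c).
Proof.
move=> a b c.
pose u : 'rV[R]_n := p1 - p2; pose v : 'rV[R]_n := p3 - p2.
have eqd : forall p q : 'rV[R]_n, p - q = (p - p2) - (q - p2).
  by move=> p q; rewrite opprB addrA subrK.
have hA : a ^+ 2 = dot u u by rewrite enorm_sq.
have hB : b ^+ 2 = dot v v by rewrite /b -opprB enorm_sq dotNl dotNr opprK.
have hC : c ^+ 2 = dot u u - 2 * dot u v + dot v v.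
  by rewrite /c (eqd p1 p3) enorm_sq -/u -/v dotBB.
have a0 : 0 <= a := enorm_ge0 _.
have b0 : 0 <= b := enorm_ge0 _.
have c0 : 0 <= c := enorm_ge0 _.
pose Bad w rho := enorm (u - w) <= rho /\ enorm (v - w) <= rho /\ rho < enorm w.
have Hmono : forall r, mono_ok [:: p1; p2; p3] r <-> (forall w rho, rho <= r -> ~ Bad w rho).
  move=> r; split.
    move=> H w rho hr [h1 [h3 h2]].
    have := H (w + p2) rho hr; rewrite consec3 /cball /= (eqd p1) (eqd p3) (eqd p2).
    rewrite addrK subrr sub0r enormN -/u -/v => /(_ h1 h3); rewrite leNgt h2.
    by [].
  move=> H q rho hr; apply/consec3; rewrite /cball /= (eqd p1) (eqd p3) (eqd p2).
  rewrite subrr sub0r enormN -/u -/v => h1 h3; rewrite leNgt; apply/negP => h2.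
  exact: (H (q - p2) rho hr).
clearbody u v.
rewrite /degree_monotonicity.
set A := dot u u in hA hC *; set B := dot v v in hB hC *; set K := dot u v in hC *.
have A0 : 0 <= A := dot_ge0 u.
have B0 : 0 <= B := dot_ge0 v.
have -> : (c ^+ 2 < a ^+ 2 + b ^+ 2) = (0 < K).
  by rewrite hA hB hC; apply/idP/idP; lra.
case: ifPn => [K0 | ].
  apply: sup_eq => r.
    rewrite lte_fin => hr; apply/Hmono => w rho hrr [h1 [h3 h2]].
    have [rho0 e1] := enorm_le h1.
    have [_ e3] := enorm_le h3.
    have := dot_ge0 (1 *: u + 1 *: v + (-2) *: w); rewrite dot_lin3.
    move: e1 e3; rewrite !dotBB -/A -/B -/K ?(dotC w u) ?(dotC w v) ?(dotC v u) -/K => e1 e3 e4.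
    have : c ^+ 2 <= 4 * rho ^+ 2 by rewrite hC; lra.
    move=> hc; have : c <= 2 * rho by nra.
    lra.
  move=> /Hmono H; rewrite lee_fin leNgt; apply/negP => hr.
  apply: (H ((1/2) *: (u + v)) (c / 2)); first lra.
  have hc2 : (c / 2) ^+ 2 = (A - 2 * K + B) / 4 by rewrite expr_div_n hC; field.
  split; [|split].
  - apply: le_enorm; first lra.
    rewrite hc2; dsimp; rewrite ?(dotC v u) -/A -/B -/K; lra.
  - apply: le_enorm; first lra.
    rewrite hc2; dsimp; rewrite ?(dotC v u) -/A -/B -/K; lra.
  - apply: lt_enorm; first lra.
    rewrite hc2; dsimp; rewrite ?(dotC v u) -/A -/B -/K; lra.
rewrite -leNgt => K0.
pose G := A * B - K ^+ 2.
have hD : ((a + b + c) / 2) * ((a + b + c) / 2 - a) * ((a + b + c) / 2 - b)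
    * ((a + b + c) / 2 - c) = G / 4.
  have -> : ((a + b + c) / 2) * ((a + b + c) / 2 - a) * ((a + b + c) / 2 - b)
    * ((a + b + c) / 2 - c) = (4 * a ^+ 2 * b ^+ 2 - (a ^+ 2 + b ^+ 2 - c ^+ 2) ^+ 2) / 16.
    by field.
  by rewrite hA hB hC /G; field.
rewrite /outradius /= hD.
have [G0|G0] := ltP 0 G.
  rewrite ifT; last by lra.
  set T := a * b * c / (4 * Num.sqrt (G / 4)).
  have sq : Num.sqrt (G / 4) ^+ 2 = G / 4 by rewrite sqr_sqrtr //; lra.
  have sq0 : 0 < Num.sqrt (G / 4) by rewrite sqrtr_gt0; lra.
  have T0 : 0 <= T by rewrite /T; apply: divr_ge0; [rewrite !mulr_ge0 | lra].
  have T2 : T ^+ 2 = A * B * (A + B - 2 * K) / (4 * G).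
    rewrite /T expr_div_n !exprMn sq hA hB hC; field; lra.
  apply: sup_eq => r.
    rewrite lte_fin => hr; apply/Hmono => w rho hrr [h1 [h3 h2]].
    have [rho0 e1] := enorm_le h1.
    have [_ e3] := enorm_le h3.
    have e2 := enorm_gt rho0 h2.
    pose P1 := B * dot u w - K * dot v w.
    pose P2 := A * dot v w - K * dot u w.
    have := dot_ge0 (G *: w + (- P1) *: u + (- P2) *: v); rewrite dot_lin3.
    move: e1 e3; rewrite !dotBB -/A -/B -/K ?(dotC w u) ?(dotC w v) ?(dotC v u) -/K => e1 e3 e4.
    have [gi1 gi2] := gram_id A B K (dot u w) (dot v w).
    have gq : B * dot u w ^+ 2 - 2 * K * dot u w * dot v w + A * dot v w ^+ 2 <= G * dot w w.
      have e5 : G * (G * dot w w - (B * dot u w ^+ 2 - 2 * K * dot u w * dot v w + A * dot v w ^+ 2))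
        = G ^+ 2 * dot w w + (- P1) ^+ 2 * A + (- P2) ^+ 2 * B + 2 * G * (- P1) * dot u w
          + 2 * G * (- P2) * dot v w + 2 * (- P1) * (- P2) * K.
        by rewrite /P1 /P2 /G; ring.
      have e6 : 0 <= G * (G * dot w w - (B * dot u w ^+ 2 - 2 * K * dot u w * dot v w + A * dot v w ^+ 2)).
        by rewrite e5; lra.
      have : 0 <= G * dot w w - (B * dot u w ^+ 2 - 2 * K * dot u w * dot v w + A * dot v w ^+ 2).
        by rewrite -(pmulr_rge0 _ G0).
      lra.
    have L := L3alg A0 B0 K0 G0 e1 e3 e2 gq.
    have hT : T ^+ 2 * (4 * G) = A * B * (A + B - 2 * K) by rewrite T2; field; lra.
    have : G * (T ^+ 2 - rho ^+ 2) <= 0 by move: L hT; rewrite /G; lra.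
    rewrite pmulr_rle0 // subr_le0 => hT2.
    nra.
  move=> /Hmono H; rewrite lee_fin leNgt; apply/negP => hr.
  have Apos : 0 < A by rewrite lt_neqAle A0 andbT; apply/eqP => hA0; move: G0; rewrite /G -hA0; nra.
  have Bpos : 0 < B by rewrite lt_neqAle B0 andbT; apply/eqP => hB0; move: G0; rewrite /G -hB0; nra.
  have T2pos : 0 < T ^+ 2 by rewrite T2; apply: divr_gt0; [rewrite !mulr_gt0 //; lra | lra].
  have Tpos : 0 < T by rewrite lt_neqAle T0 andbT; apply/eqP => hT0; move: T2pos; rewrite -hT0; nra.
  pose t := (r - T) / T.
  have t0 : 0 < t by apply: divr_gt0; lra.
  have rt : r = (1 + t) * T by rewrite /t; field; lra.
  have tA : 0 < t * A by apply: mulr_gt0.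
  have tB : 0 < t * B by apply: mulr_gt0.
  pose lam := (1 + t) * (B * (A - K) / (2 * G)).
  pose mu := (1 + t) * (A * (B - K) / (2 * G)).
  pose w := lam *: u + mu *: v.
  have E1 : dot u w = (1 + t) * A / 2.
    rewrite /w; dsimp; rewrite -/A -/K /lam /mu /G; field; rewrite -/G; lra.
  have E2 : dot v w = (1 + t) * B / 2.
    rewrite /w; dsimp; rewrite (dotC v u) -/B -/K /lam /mu /G; field; rewrite -/G; lra.
  have E3 : dot w w = (1 + t) ^+ 2 * T ^+ 2.
    rewrite /w; dsimp; rewrite (dotC v u) -/A -/B -/K T2 /lam /mu /G; field; rewrite -/G; lra.
  have ltn : forall x y : 'rV[R]_n, dot x x < dot y y -> enorm x < enorm y.
    move=> x y; rewrite -!enorm_sq => hxy; have := enorm_ge0 x; have := enorm_ge0 y; nra.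
  have r2 : r ^+ 2 = (1 + t) ^+ 2 * T ^+ 2 by rewrite rt exprMn.
  apply: (H w (Num.max (enorm (u - w)) (enorm (v - w)))).
    rewrite ge_max; apply/andP; split.
      apply: le_enorm; first lra.
      rewrite dotBB ?E1 ?E2 E3 r2 -/A; lra.
    apply: le_enorm; first lra.
    rewrite dotBB ?E1 ?E2 E3 r2 -/B; lra.
  split; [by rewrite le_max lexx | split; first by rewrite le_max lexx orbT].
  rewrite gt_max; apply/andP; split; apply: ltn;
    [rewrite dotBB E1 E3 -/A; lra | rewrite dotBB E2 E3 -/B; lra].
have -> : (0 < G / 4) = false by apply/negbTE; rewrite -leNgt; lra.
apply: sup_eq => r; last by move=> _; exact: leey.
move=> _; apply/Hmono => w rho _ [h1 [h3 h2]].
have [rho0 e1] := enorm_le h1.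
have [_ e3] := enorm_le h3.
have e2 := enorm_gt rho0 h2.
move: e1 e3; rewrite !dotBB -/A -/B => e1 e3.
have al : A < 2 * dot u w by lra.
have bl : B < 2 * dot v w by lra.
have z0 : dot (B *: u + (- K) *: v + 0 *: w) (B *: u + (- K) *: v + 0 *: w) = 0.
  apply/eqP; rewrite eq_le dot_ge0 andbT dot_lin3 -/A -/B -/K.
  have -> : B ^+ 2 * A + (- K) ^+ 2 * B + 0 ^+ 2 * dot w w + 2 * B * - K * K +
    2 * B * 0 * dot u w + 2 * - K * 0 * dot v w = B * G by rewrite /G; ring.
  by rewrite mulr_ge0_le0.
have := dot_eq0 w z0; dsimp; rewrite ?(dotC w u) ?(dotC w v) => hz.
have [B00|Bpos] := eqVneq B 0.
  have := dot_eq0 w B00; lra.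
have Bp : 0 < B by rewrite lt_neqAle eq_sym Bpos B0.
have : 0 < B * dot u w by apply: mulr_gt0; lra.
have : 0 <= - K * dot v w by apply: mulr_ge0; lra.
lra.
Qed.
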